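(* Let $f:\mathbb{R}^n\to\mathbb{R}$ be a polynomial of degree $d$. Assume that $0$ is an isolated zero of $f$ (in particular $f(0)=0$) and that there is $\epsilon_0>0$ such that $\langle\nabla f(x),x\rangle\neq0$ for all $x\in B(0,\epsilon_0)\setminus\{0\}$. Then $|f(ux)|\leq|f(x)|$ for all $u\in[0,1]$ and all $x\in B(0,\epsilon_0)$. In particular, for every $t\geq0$ the sub-level set $\{x\in B(0,\epsilon_0): |f(x)|\leq t\}$ is star-shaped with respect to $0$.
   Context: $B(0,r)$ denotes the open Euclidean ball of radius $r$ centered at $0$, and $\langle\cdot,\cdot\rangle$ the Euclidean inner product. *)

(* Defs.v *)
From HB Require Import structures.
From mathcomp Require Import all_boot all_order all_algebra.
From mathcomp Require Import reals.
From mathcomp Require Export mpoly.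
Set Implicit Arguments. Unset Strict Implicit. Unset Printing Implicit Defensive.
Import Order.TTheory GRing.Theory Num.Theory.
Local Open Scope ring_scope.

Definition sqnorm (R : realType) (n : nat) (x : 'I_n -> R) : R :=
  \sum_(i < n) x i ^+ 2.

Definition inball0 (R : realType) (n : nat) (r : R) (x : 'I_n -> R) : Prop :=
  Num.sqrt (sqnorm x) < r.

Definition grad_dot (R : realType) (n : nat) (f : {mpoly R[n]}) (x : 'I_n -> R) : R :=
  \sum_(i < n) (mderiv i f).@[x] * x i.

Definition vscale (R : realType) (n : nat) (u : R) (x : 'I_n -> R) : 'I_n -> R :=
  fun i => u * x i.

Definition tdegree (R : realType) (n : nat) (f : {mpoly R[n]}) : nat := (msize f).-1.

(* Main.v *)
Require Import Defs.
From HB Require Import structures.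
From mathcomp Require Import all_boot all_order all_algebra.
From mathcomp Require Import reals.
From mathcomp Require Import mpoly.
From mathcomp Require Import polyrcf.
From mathcomp Require Import ring.
Import Order.TTheory GRing.Theory Num.Theory.
Local Open Scope ring_scope.

Section Aux.
Variable R : realType.
Variable n : nat.

Definition Pl (x : 'I_n -> R) (f : {mpoly R[n]}) : {poly R} :=
  \sum_(m <- msupp f) (f@_m * \prod_(i < n) x i ^+ m i) *: 'X^(mdeg m).

Lemma prod_scale (u : R) (x : 'I_n -> R) (m : 'X_{1..n}) :
  \prod_(i < n) (vscale u x i) ^+ m i = u ^+ mdeg m * \prod_(i < n) x i ^+ m i.
Proof.
rewrite /vscale; under eq_bigr do rewrite exprMn.
by rewrite big_split /= prodrXr mdegE.
Qed.

Lemma evalP (x : 'I_n -> R) f u : (Pl x f).[u] = f.@[vscale u x].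
Proof.
rewrite /Pl horner_sum mevalE. apply: eq_bigr. move=> m _.
by rewrite hornerZ hornerXn prod_scale -mulrA [X in _ * X]mulrC.
Qed.

Lemma euler (f : {mpoly R[n]}) :
  \sum_(i < n) mderiv i f * 'X_i =
  \sum_(m <- msupp f) (f@_m * (mdeg m)%:R) *: 'X_[m].
Proof.
under eq_bigr => i _ do rewrite {1}[f]mpolyE raddf_sum /= mulr_suml.
rewrite exchange_big /=; apply: eq_bigr => m _.
transitivity (\sum_(i < n) (f@_m * (m i)%:R) *: 'X_[m]).
  apply: eq_bigr => i _; rewrite mderivZ mderivX -scalerAl -scalerAl scalerA.
  case: (posnP (m i)) => [->|mi]; first by rewrite !mulr0 !scale0r.
  rewrite -mpolyXD submK //; apply/mnm_lepP => j; rewrite mnm1E.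
  by case: eqP => [<-|].
by rewrite -scaler_suml -mulr_sumr -natr_sum mdegE.
Qed.

Lemma derP (x : 'I_n -> R) f u :
  u * (Pl x f)^`().[u] = grad_dot f (vscale u x).
Proof.
rewrite /grad_dot.
transitivity (meval (vscale u x) (\sum_(i < n) mderiv i f * 'X_i)).
  rewrite euler /Pl raddf_sum /= horner_sum mulr_sumr raddf_sum /=.
  apply: eq_bigr => m _.
  rewrite derivZ derivXn hornerZ hornerMn hornerXn mevalZ mevalX prod_scale.
  case: (mdeg m) => [|k] /=; first by rewrite !mulr0n !mulr0 !mul0r.
  rewrite -mulr_natr exprS.
  set a := f@_m; set b := \prod_(i < n) _; set c := u ^+ k; set e := (k.+1)%:R.
  ring.
rewrite raddf_sum /=; apply: eq_bigr => i _.
by rewrite mevalM mevalXU.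
Qed.

Lemma key (p : {poly R}) : p.[0] = 0 ->
  (forall c, 0 < c <= 1 -> p^`().[c] != 0) ->
  forall u, 0 <= u <= 1 -> `|p.[u]| <= `|p.[1]|.
Proof.
move=> p0 hd u /andP[u0 u1].
have hsg : forall c, 0 < c < 1 -> 0 < p^`().[c] * p^`().[1].
  move=> c /andP[c0 c1]; rewrite ltNge; apply/negP => hle.
  have [y yin ry] := polyrcf.poly_ivt (ltW c1) hle.
  have : p^`().[y] != 0.
    move: yin; rewrite in_itv /= => /andP[ya yb].
    by apply: hd; rewrite (lt_le_trans c0 ya) yb.
  by rewrite (rootP ry) eqxx.
have h1 : p^`().[1] != 0 by apply: hd; rewrite ltr01 lexx.
have i0 : (0:R) \in `[0, 1] by rewrite in_itv /= lexx ler01.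
have i1 : (1:R) \in `[0, 1] by rewrite in_itv /= lexx ler01.
have iu : u \in `[0, 1] by rewrite in_itv /= u0 u1.
case: (ltrgtP (p^`().[1]) 0) => [hn|hp|]; last by move/eqP; rewrite (negbTE h1).
- have der : forall c, c \in `]0, 1[ -> 0 <= (- p)^`().[c].
    move=> c cin; rewrite derivN hornerN oppr_ge0 ltW //.
    move: cin; rewrite in_itv /= => /andP[ca cb].
    have := hsg c; rewrite ca cb => /(_ isT).
    by rewrite nmulr_lgt0.
  have := ler_hornerW der i0 iu u0; have := ler_hornerW der iu i1 u1.
  rewrite !hornerN p0 oppr0 lerN2 oppr_ge0 => h2 h3.
  by rewrite !ler0_norm ?lerN2 // (le_trans h2 h3).
- have der : forall c, c \in `]0, 1[ -> 0 <= p^`().[c].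
    move=> c cin; apply: ltW.
    move: cin; rewrite in_itv /= => /andP[ca cb].
    have := hsg c; rewrite ca cb => /(_ isT).
    by rewrite pmulr_lgt0.
  have := ler_hornerW der i0 iu u0; have := ler_hornerW der iu i1 u1.
  rewrite p0 => h2 h3.
  by rewrite !ger0_norm // (le_trans h3 h2).
Qed.

End Aux.

Arguments Pl {R n}.
From Stdlib Require Import Classical FunctionalExtensionality.

Lemma ball_scale (R : realType) (n : nat) (r c : R) (x : 'I_n -> R) :
  0 <= c <= 1 -> inball0 r x -> inball0 r (vscale c x).
Proof.
move=> /andP[c0 c1]; rewrite /inball0 /sqnorm /vscale => hx.
under eq_bigr do rewrite exprMn.
rewrite -mulr_sumr sqrtrM ?sqr_ge0 // sqrtr_sqr ger0_norm //.
apply: le_lt_trans hx; rewrite ler_piMl ?sqrtr_ge0 //.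
Qed.

Lemma part1 {R : realType} {n : nat} {f : {mpoly R[n]}} {eps0 : R}
  (hf0 : f.@[fun _ => 0] = 0)
  (hgrad : forall x : 'I_n -> R, inball0 eps0 x -> x <> (fun _ => 0) ->
     grad_dot f x != 0) :
  forall (u : R) (x : 'I_n -> R), 0 <= u <= 1 -> inball0 eps0 x ->
     `|f.@[vscale u x]| <= `|f.@[x]|.
Proof.
move=> u x hu hx.
case: (classic (x = (fun _ => 0))) => [->|xn0].
  have -> : vscale u (fun _ : 'I_n => (0:R)) = (fun _ => 0).
    by apply: functional_extensionality => i; rewrite /vscale mulr0.
  by [].
have -> : f.@[x] = (Pl x f).[1].
  rewrite evalP; congr (_.@[_]); apply: functional_extensionality => i.
  by rewrite /vscale mul1r.
rewrite -evalP; apply: key => //.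
  rewrite evalP -[RHS]hf0; congr (_.@[_]); apply: functional_extensionality => i.
  by rewrite /vscale mul0r.
move=> c /andP[c0 c1].
have : c * (Pl x f)^`().[c] != 0.
  rewrite derP; apply: hgrad; first by apply: ball_scale => //; rewrite ltW.
  move=> h; apply: xn0; apply: functional_extensionality => i.
  have := congr1 (fun g => g i) h; rewrite /vscale /= => /eqP.
  by rewrite mulf_eq0 (gt_eqF c0) /= => /eqP.
by apply: contraNneq => ->; rewrite mulr0.
Qed.

Theorem lemma3 (R : realType) (n d : nat) (f : {mpoly R[n]})
  (hdeg : tdegree f = d)
  (eps0 : R) (heps0 : 0 < eps0)
  (hf0 : f.@[fun _ => 0] = 0)
  (hiso : exists r : R, 0 < r /\
     forall x : 'I_n -> R, inball0 r x -> f.@[x] = 0 -> x = (fun _ => 0))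
  (hgrad : forall x : 'I_n -> R, inball0 eps0 x -> x <> (fun _ => 0) ->
     grad_dot f x != 0) :
  (forall (u : R) (x : 'I_n -> R), 0 <= u <= 1 -> inball0 eps0 x ->
     `|f.@[vscale u x]| <= `|f.@[x]|)
  /\
  (forall t : R, 0 <= t -> forall x : 'I_n -> R,
     inball0 eps0 x -> `|f.@[x]| <= t ->
     forall u : R, 0 <= u <= 1 ->
       inball0 eps0 (vscale u x) /\ `|f.@[vscale u x]| <= t).
Proof.
have P1 := part1 hf0 hgrad.
split => //.
move=> t t0 x hx hft u hu; split; first exact: ball_scale.
exact: le_trans (P1 u x hu hx) hft.
Qed.
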